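(* Let $0<\epsilon<1/2$, $C=\lceil\epsilon^{-1}\rceil$ and $c\in\{0,\dots,C-1\}$. Let $G$ be a graph with edge weights $w(e)\ge1$, and let $G^c$, its levels and the combined matching $\hat{M}^c$ be as defined below, where for every level $l$ the matching $M^c_l$ is a $(1+\epsilon)$-approximate maximum weight matching of the subgraph of $G^c$ consisting of its level-$l$ edges. Let $\mathcal{M}^c$ be a maximum weight matching of $G^c$. Then $$(1+7\epsilon)\,w(\hat{M}^c)\ge w(\mathcal{M}^c).$$
   Context: An edge $e$ is in bucket $b\in\mathbb{Z}$ if $w(e)\in[\epsilon^{-b},\epsilon^{-(b+1)})$. The graph $G^c$ is obtained from $G$ by removing all edges whose bucket $b$ satisfies $b\equiv c\pmod C$. Level $l$ of copy $c$ consists of the edges of $G^c$ in buckets $lC+c+1,\dots,(l+1)C+c-1$. The combined matching $\hat{M}^c$ is formed greedily: start from $\emptyset$; for $l$ from the maximum level down to the minimum, add the (remaining) edges of $M^c_l$, and for each $(u,v)\in M^c_l$ remove all edges incident to $u$ or $v$ from every $M^c_{l'}$ with $l'<l$. For an edge set $S$, $w(S)=\sum_{e\in S}w(e)$; a matching $M$ of $H$ is a $(1+\epsilon)$-approximate maximum weight matching if $w(M)\ge\frac{1}{1+\epsilon}$ times the maximum weight of a matching of $H$. *)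

(* Defs.v *)
From HB Require Import structures.
From mathcomp Require Import all_boot all_order all_algebra.
From mathcomp Require Import intdiv boolp reals.
Set Implicit Arguments. Unset Strict Implicit. Unset Printing Implicit Defensive.
Import Order.TTheory GRing.Theory Num.Theory.
Local Open Scope ring_scope.

Section Defs.
Variables (R : realType) (V : finType).
Implicit Types (E F M : {set {set V}}) (w : {set V} -> R) (eps : R).

Definition Cof eps : int := Num.ceil (eps^-1).

Definition in_bucket w eps (e : {set V}) (b : int) : Prop :=
  (eps^-1) ^ b <= w e /\ w e < (eps^-1) ^ (b + 1).

Definition Gc_edges E w eps (c : int) : {set {set V}} :=
  [set e in E | `[< ~ exists b, in_bucket w eps e b /\ (b = c %[mod Cof eps])%Z >]].

Definition level_edges E w eps (c l : int) : {set {set V}} :=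
  [set e in Gc_edges E w eps c | `[< exists b, in_bucket w eps e b /\
      l * Cof eps + c + 1 <= b /\ b <= (l + 1) * Cof eps + c - 1 >]].

Definition is_matching F M : Prop :=
  M \subset F /\ {in M &, forall e f : {set V}, e != f -> [disjoint e & f]}.

Definition wsum w M : R := \sum_(e in M) w e.

Definition is_max_weight_matching w F M : Prop :=
  is_matching F M /\ forall M', is_matching F M' -> wsum w M' <= wsum w M.

Definition is_approx_mwm w eps F M : Prop :=
  is_matching F M /\
  forall M', is_matching F M' -> (1 + eps)^-1 * wsum w M' <= wsum w M.

Definition greedy_step (M : int -> {set {set V}}) (acc : {set {set V}}) (l : int)
  : {set {set V}} :=
  acc :|: [set e in M l | [forall f in acc, [disjoint e & f]]].

Definition levels_down (lmin lmax : int) : seq int :=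
  [seq lmax - i%:Z | i <- iota 0 (absz (lmax - lmin)).+1].

Definition combined (M : int -> {set {set V}}) (lmin lmax : int) : {set {set V}} :=
  foldl (greedy_step M) set0 (levels_down lmin lmax).

End Defs.

(* Main.v *)
Require Import Defs.
From HB Require Import structures.
From mathcomp Require Import all_boot all_order all_algebra.
From mathcomp Require Import intdiv boolp reals.
From mathcomp Require Import ring lra zify.
Import Order.TTheory GRing.Theory Num.Theory.
Local Open Scope ring_scope.

Lemma card_removed (V : finType) (acc Ml : {set {set V}}) :
  (forall f, f \in acc -> #|f| = 2%N) ->
  {in Ml &, forall e f : {set V}, e != f -> [disjoint e & f]} ->
  (#|Ml :\: [set e in Ml | [forall f in acc, [disjoint e & f]]]| <= 2 * #|acc|)%N.
Proof.
move=> Hacc Hm.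
set Rm := _ :\: _.
pose g (e : {set V}) := [pick v in e :&: cover acc].
have gsome : forall e, e \in Rm -> e \in Ml /\ exists v, g e = Some v /\ v \in e /\ v \in cover acc.
  move=> e; rewrite !inE => /andP[/negP Hn eM]; split => //.
  rewrite /g; case: pickP => [v|Hv].
    by rewrite !inE => /andP[ve vc]; exists v.
  exfalso; apply: Hn; rewrite eM /=; apply/forall_inP => f fa.
  apply/pred0P => v /=; apply/negP => /andP[ve vf].
  by move: (Hv v); rewrite !inE ve /=; move/negP; apply; apply/bigcupP; exists f.
have ginj : {in Rm &, injective g}.
  move=> e1 e2 H1 H2 Heq.
  have [m1 [v [g1 [v1 _]]]] := gsome _ H1; have [m2 [v' [g2 [v2 _]]]] := gsome _ H2.
  move: Heq; rewrite g1 g2 => -[Evv]; rewrite -Evv in v2.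
  apply/eqP/negPn/negP => ne.
  have := Hm _ _ m1 m2 ne.
  by move/pred0P/(_ v); rewrite /= v1 v2.
have sub : g @: Rm \subset Some @: cover acc.
  apply/subsetP => o /imsetP[e He ->].
  have [_ [v [-> [_ vc]]]] := gsome _ He.
  by apply/imsetP; exists v.
have := subset_leq_card sub.
rewrite card_in_imset //; last by move=> ? ? ? ? [].
move=> h; rewrite card_in_imset // in h; apply: leq_trans h _.
have /leqifP := leq_card_cover acc.
have -> : (\sum_(A in acc) #|A| = 2 * #|acc|)%N.
  rewrite (eq_bigr (fun=> 2%N)); last by move=> f /Hacc.
  by rewrite sum_nat_const mulnC.
by case: ifP => _ h2; [rewrite (eqP h2) | apply: ltnW].
Qed.

Lemma levels_cons (n : int) (k : nat) :
  [seq n - i%:Z | i <- iota 0 k.+1] = n :: [seq (n - 1) - i%:Z | i <- iota 0 k].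
Proof.
rewrite /= -(addn0 1%N) iotaDl -map_comp subr0; congr (_ :: _).
apply: eq_map => i /=; rewrite PoszD; lia.
Qed.

Lemma wsum_ge0 (R : realType) (V : finType) (w : {set V} -> R) (A : {set {set V}}) :
  (forall e, e \in A -> 0 <= w e) -> 0 <= wsum w A.
Proof. by move=> H; rewrite /wsum sumr_ge0. Qed.

Lemma fold_inv (R : realType) (V : finType) (w : {set V} -> R) (eps : R)
  (M : int -> {set {set V}}) (U : int -> R) :
  0 < eps ->
  (forall l e, e \in M l -> #|e| = 2%N) ->
  (forall l, {in M l &, forall e f : {set V}, e != f -> [disjoint e & f]}) ->
  (forall l e, e \in M l -> w e < U l) ->
  (forall l e, e \in M l -> U (l - 1) <= eps * w e) ->
  (forall l, 0 <= U l) ->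
  (forall l, 2 * U (l - 1) <= U l) ->
  forall (k : nat) (acc : {set {set V}}) (n : int) (S : R),
  (forall f, f \in acc -> #|f| = 2%N) ->
  S <= (1 + 4 * eps) * wsum w acc - 4 * #|acc|%:R * U n ->
  S + \sum_(l <- [seq n - i%:Z | i <- iota 0 k]) wsum w (M l) <=
  (1 + 4 * eps) * wsum w (foldl (greedy_step M) acc [seq n - i%:Z | i <- iota 0 k])
   - 4 * #|foldl (greedy_step M) acc [seq n - i%:Z | i <- iota 0 k]|%:R * U (n - k%:Z).
Proof.
move=> ep H2 Hm Hup Hlo U0 Uh; elim=> [|k IH] acc n S Hacc HS.
  by rewrite /= big_nil addr0 subr0.
rewrite levels_cons big_cons /=.
set A := [set e in M n | [forall f in acc, [disjoint e & f]]].
have -> : n - k.+1%:Z = (n - 1) - k%:Z by rewrite -addn1 PoszD; lia.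
rewrite addrA; apply: IH.
  by move=> f; rewrite inE => /orP[/Hacc|]; rewrite // inE => /andP[/H2].
have dis : [disjoint acc & A].
  apply/pred0P => e /=; apply/negP => /andP[ea].
  rewrite inE => /andP[eM /forall_inP /(_ e ea) de].
  have : e = set0 by apply/setP => v; rewrite inE; have := pred0P de v; rewrite /= andbb.
  by move=> e0; move: (H2 _ _ eM); rewrite e0 cards0.
have wU : wsum w (acc :|: A) = wsum w acc + wsum w A.
  rewrite /wsum -bigU //; apply: eq_bigl => e; by rewrite !inE.
have cU : #|acc :|: A| = (#|acc| + #|A|)%N.
  by rewrite cardsU; move/disjoint_setI0: dis => ->; rewrite cards0 subn0.
have AM : A \subset M n by apply/subsetP => e; rewrite inE => /andP[].
have wM : wsum w (M n) = wsum w A + wsum w (M n :\: A).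
  by rewrite /wsum (big_setID A) /= (setIidPr AM).
have cR := @card_removed _ acc (M n) Hacc (Hm n).
have wR : wsum w (M n :\: A) <= #|M n :\: A|%:R * U n.
  rewrite /wsum mulr_natl -sumr_const; apply: ler_sum => e; rewrite inE => /andP[_ /Hup] /ltW //.
have wA : #|A|%:R * U (n - 1) <= eps * wsum w A.
  rewrite /wsum mulr_sumr mulr_natl -sumr_const; apply: ler_sum => e /(subsetP AM) /Hlo //.
have cR' : #|M n :\: A|%:R * U n <= 2 * #|acc|%:R * U n.
  by rewrite ler_wpM2r // -natrM ler_nat.
have h2 : #|acc|%:R * (2 * U (n - 1)) <= #|acc|%:R * U n by rewrite ler_wpM2l.
rewrite wU cU wM natrD.
have := Uh n. have := U0 n. have := U0 (n-1).
lra.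
Qed.

Lemma natr_le_exp (R : realType) (q : R) (n : nat) : 2 <= q -> n%:R <= q ^+ n.
Proof.
move=> q2; elim: n => [|n IH]; first by rewrite expr0 ler01.
rewrite exprS -natr1.
have : 1 <= q ^+ n by apply: exprn_ege1; lra.
nra.
Qed.

Lemma bucket_exists (R : realType) (V : finType) (w : {set V} -> R) (eps : R) e :
  2 < eps^-1 -> 1 <= w e -> exists b, in_bucket w eps e b.
Proof.
move=> q2 we.
set q := eps^-1 in q2 *.
have ex : exists n, w e < q ^+ n.
  exists (Num.bound (w e)); apply: (lt_le_trans (archi_boundP _)); first lra.
  by apply: natr_le_exp; lra.
have [m1 Hm Hmin] : exists2 m, w e < q ^+ m & forall k, w e < q ^+ k -> (m <= k)%N.
  by case: (ex_minnP ex) => mm H1 H2; exists mm.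
case: m1 Hm Hmin => [|m'] Hm Hmin.
  by move: Hm; rewrite expr0; lra.
exists m'%:Z; rewrite /in_bucket; split.
  rewrite -exprnP leNgt; apply/negP => /Hmin; by rewrite ltnn.
by have -> : m'%:Z + 1 = m'.+1%:Z by rewrite -addn1 PoszD.
Qed.

Lemma in_some_level (R : realType) (V : finType) (E : {set {set V}}) (w : {set V} -> R)
  (eps : R) (c : int) e :
  0 < Cof eps -> 2 < eps^-1 -> 1 <= w e -> e \in Gc_edges E w eps c ->
  exists l, e \in level_edges E w eps c l.
Proof.
move=> C0 q2 we eG.
have [b Hb] := @bucket_exists R V w eps e q2 we.
have eG' := eG.
move: eG; rewrite inE => /andP[eE /asboolP Hn].
set C := Cof eps in C0 Hn *.
exists ((b - c - 1) %/ C)%Z.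
rewrite inE eG' /=; apply/asboolP; exists b; split => //.
have hd := divz_eq (b - c - 1) C.
have r0 := modz_ge0 (b - c - 1) (lt0r_neq0 C0).
have r1 := ltz_pmod (b - c - 1) C0.
set l := ((b - c - 1) %/ C)%Z in hd *; set r := ((b - c - 1) %% C)%Z in hd r0 r1 *.
have [rC|rC] := eqVneq r (C - 1).
  exfalso; apply: Hn; exists b; split => //.
  have -> : b = (l + 1) * C + c by rewrite mulrDl mul1r; lia.
  exact: modzMDl.
have : r < C - 1 by rewrite lt_neqAle rC /=; lia.
move=> rlt; rewrite mulrDl mul1r; lia.
Qed.

Theorem lemma10 (R : realType) (V : finType) (E : {set {set V}})
  (w : {set V} -> R) (eps : R) (c : int) (M : int -> {set {set V}})
  (lmin lmax : int) (Mopt : {set {set V}}) :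
  0 < eps -> eps < 1 / 2 ->
  (forall e, e \in E -> #|e| = 2%N) ->
  (forall e, e \in E -> 1 <= w e) ->
  0 <= c < Cof eps ->
  (forall l : int, is_approx_mwm w eps (level_edges E w eps c l) (M l)) ->
  lmin <= lmax ->
  (forall l : int, (l < lmin) || (lmax < l) -> level_edges E w eps c l = set0) ->
  is_max_weight_matching w (Gc_edges E w eps c) Mopt ->
  wsum w Mopt <= (1 + 7 * eps) * wsum w (combined M lmin lmax).
Proof.
move=> e0 e2 HE2 HEw /andP[c0 cC] Happ lml Hout [[MoG Modis] _].
set C := Cof eps in cC *.
have C1 : 0 < C by apply: le_lt_trans cC.
set q := eps^-1.
have qe : eps * q = 1 by rewrite /q mulfV //; apply/eqP; lra.
have qp : 0 < q by rewrite /q invr_gt0.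
have q2 : 2 < q.
  have : 0 < q * (1 - 2 * eps) by apply: mulr_gt0 => //; lra.
  nra.
have q1 : 1 < q by lra.
have qn0 : q != 0 by apply/eqP; lra.
have levE : forall l e, e \in level_edges E w eps c l -> e \in E /\
   exists b, in_bucket w eps e b /\ l * C + c + 1 <= b /\ b <= (l + 1) * C + c - 1.
  move=> l e; rewrite inE => /andP[eG /asboolP Hb]; split => //.
  by move: eG; rewrite inE => /andP[].
have ML : forall l e, e \in M l -> e \in level_edges E w eps c l.
  by move=> l e; case: (Happ l) => -[/subsetP H _] _ /H.
pose U (l : int) := q ^ ((l + 1) * C + c).
have H2 : forall l e, e \in M l -> #|e| = 2%N.
  by move=> l e /ML /levE [/HE2].
have Hm : forall l, {in M l &, forall e f : {set V}, e != f -> [disjoint e & f]}.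
  by move=> l; case: (Happ l) => -[_ H] _.
have Hup : forall l e, e \in M l -> w e < U l.
  move=> l e /ML /levE [_ [b [[_ hb] [_ hb2]]]].
  apply: (lt_le_trans hb); rewrite /U ler_eXz2l //; lia.
have Hlo : forall l e, e \in M l -> U (l - 1) <= eps * w e.
  move=> l e /ML /levE [_ [b [[hb _] [hb2 _]]]].
  have : q ^ (l * C + c + 1) <= w e.
    by apply: le_trans hb; rewrite ler_eXz2l.
  rewrite expfzDr // expr1z /U subrK => h.
  have hp : 0 < q ^ (l * C + c) by apply: exprz_gt0; lra.
  nra.
have U0 : forall l, 0 <= U l by move=> l; apply/ltW/exprz_gt0; lra.
have Uh : forall l, 2 * U (l - 1) <= U l.
  move=> l; rewrite /U subrK.
  have -> : (l + 1) * C + c = (l * C + c) + C by rewrite mulrDl mul1r; lia.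
  rewrite [q ^ (_ + C)]expfzDr //.
  have hC : q <= q ^ C by rewrite -[X in X <= _]expr1z ler_eXz2l //; lia.
  have := U0 (l - 1); rewrite /U subrK => h.
  have h2 : 0 <= q ^ C - 2 by lra.
  have := mulr_ge0 h h2; lra.
set k := (absz (lmax - lmin)).+1.
have s0 : forall f : {set V}, f \in (set0 : {set {set V}}) -> #|f| = 2%N by move=> f; rewrite inE.
have i0 : (0 : R) <= (1 + 4 * eps) * wsum w (set0 : {set {set V}}) - 4 * #|(set0 : {set {set V}})|%:R * U lmax.
  by rewrite /wsum big_set0 cards0; lra.
have Hfold := @fold_inv R V w eps M U e0 H2 Hm Hup Hlo U0 Uh k set0 lmax 0 s0 i0.
rewrite add0r in Hfold.
set ld := [seq lmax - i%:Z | i <- iota 0 k] in Hfold.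
have hatE : combined M lmin lmax = foldl (greedy_step M) set0 ld by [].
rewrite hatE.
set W := wsum w (foldl (greedy_step M) set0 ld) in Hfold *.
have Hsum : \sum_(l <- ld) wsum w (M l) <= (1 + 4 * eps) * W.
  apply: (le_trans Hfold); rewrite lerBlDr lerDl; apply: mulr_ge0 => //.
  by apply: mulr_ge0 => //; lra.
pose L l := level_edges E w eps c l.
have Happ2 : forall l, wsum w (Mopt :&: L l) <= (1 + eps) * wsum w (M l).
  move=> l; case: (Happ l) => _ H.
  have := H (Mopt :&: L l).
  have hm : is_matching (L l) (Mopt :&: L l).
    split; first exact: subsetIr.
    by move=> e f; rewrite !inE => /andP[eM _] /andP[fM _]; apply: Modis.
  move=> /(_ hm) h.
  have p : 0 < 1 + eps by lra.
  rewrite -[X in X <= _](mulVKf (lt0r_neq0 p)).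
  by apply: ler_wpM2l; [exact: ltW | exact: h].
have cover : forall e, e \in Mopt -> exists2 l, l \in ld & e \in L l.
  move=> e eM.
  have eG := subsetP MoG _ eM.
  have eE : e \in E by move: eG; rewrite inE => /andP[].
  have q2' : 2 < eps^-1 by [].
  have [l el] := @in_some_level R V E w eps c e C1 q2' (HEw _ eE) eG.
  exists l => //.
  have : ~~ ((l < lmin) || (lmax < l)).
    apply/negP => /Hout hl; by rewrite /L hl inE in el.
  rewrite negb_or -!leNgt => /andP[h1 h2].
  have g1 : 0 <= lmax - l by rewrite subr_ge0.
  have g2 : 0 <= lmax - lmin by rewrite subr_ge0; apply: le_trans h2.
  apply/mapP; exists (absz (lmax - l)); last by rewrite gez0_abs // opprB addrC subrK.
  have h : (absz (lmax - l) <= absz (lmax - lmin))%N.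
    by rewrite -lez_nat !gez0_abs // lerD2l lerN2.
  by rewrite mem_iota /k leq0n add0n ltnS h.
have Hcov : wsum w Mopt <= \sum_(l <- ld) wsum w (Mopt :&: L l).
  have -> : \sum_(l <- ld) wsum w (Mopt :&: L l) =
     \sum_(e in Mopt) \sum_(l <- ld) (if e \in L l then w e else 0).
    rewrite exchange_big /=; apply: eq_bigr => l _.
    rewrite /wsum big_mkcond [RHS]big_mkcond /=; apply: eq_bigr => e _.
    by rewrite inE; case: (e \in Mopt).
  rewrite /wsum; apply: ler_sum => e eM.
  have [l lin el] := cover e eM.
  rewrite (big_rem l lin) /= el lerDl.
  have eE : e \in E by move: (subsetP MoG _ eM); rewrite inE => /andP[].
  have we := HEw _ eE.
  apply: sumr_ge0 => l' _; case: ifP => _ //.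
  exact: le_trans we.
have Hs2 : \sum_(l <- ld) wsum w (Mopt :&: L l) <= (1 + eps) * \sum_(l <- ld) wsum w (M l).
  by rewrite mulr_sumr; apply: ler_sum => l _; apply: Happ2.
have Sge0 : 0 <= \sum_(l <- ld) wsum w (M l).
  apply: sumr_ge0 => l _; apply: sumr_ge0 => e eM.
  have := Hlo _ _ eM; have := U0 (l - 1) => h1 h2.
  have : 0 <= eps * w e by apply: le_trans h2.
  by rewrite pmulr_rge0.
have W0 : 0 <= W.
  have : 0 <= (1 + 4 * eps) * W by apply: le_trans Hsum.
  by rewrite pmulr_rge0 //; lra.
have h3 : 0 <= eps * W * (1 - 2 * eps) by apply: mulr_ge0; [apply: mulr_ge0 => //; lra | lra].
set S := \sum_(l <- ld) wsum w (M l) in Hsum Hs2 Sge0.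
set T := \sum_(l <- ld) wsum w (Mopt :&: L l) in Hcov Hs2.
have h4 : (1 + eps) * S <= (1 + eps) * ((1 + 4 * eps) * W).
  by apply: ler_wpM2l => //; lra.
nra.
Qed.
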